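(* For $\mu\ge1$ define $$c^*(\mu)=\int_0^\infty \ln(z)\,G_\alpha\!\left(\frac{z}{\mu}\right)g_\alpha(z)\,dz+\int_0^\infty \ln(z)\,G_\alpha(\mu z)\,g_\alpha(z)\,dz .$$ Then $c^*$ is differentiable on $[1,\infty)$ with $$\frac{d}{d\mu}c^*(\mu)=-\frac{\Gamma(2\alpha)\,\mu^{\alpha-1}}{\Gamma(\alpha)^2(1+\mu)^{2\alpha}}\ln\mu\le 0,$$ and $\inf_{\mu\ge1}c^*(\mu)=\psi(\alpha)$, $\sup_{\mu\ge1}c^*(\mu)=c^*(1)=2\int_0^\infty\ln(z)G_\alpha(z)g_\alpha(z)\,dz$.
   Context: $\alpha>0$ is fixed. $G_\alpha$ and $g_\alpha$ denote the distribution function and density of the gamma distribution with shape $\alpha$ and scale $1$. $\psi=\Gamma'/\Gamma$ is the digamma function. *)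

(* Defs.v *)
From Stdlib Require Import Reals.
From Coquelicot Require Import Coquelicot.
Open Scope R_scope.

Definition Gamma (a : R) : R :=
  RInt_gen (fun t => Rpower t (a - 1) * exp (- t)) (at_right 0) (Rbar_locally p_infty).

Definition digamma (a : R) : R := Derive Gamma a / Gamma a.

Definition gamma_pdf (a z : R) : R :=
  if Rlt_dec 0 z then Rpower z (a - 1) * exp (- z) / Gamma a else 0.

Definition gamma_cdf (a x : R) : R :=
  if Rlt_dec 0 x then RInt_gen (gamma_pdf a) (at_right 0) (at_point x) else 0.

Definition cstar (a mu : R) : R :=
  RInt_gen (fun z => ln z * gamma_cdf a (z / mu) * gamma_pdf a z)
    (at_right 0) (Rbar_locally p_infty)
  + RInt_gen (fun z => ln z * gamma_cdf a (mu * z) * gamma_pdf a z)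
    (at_right 0) (Rbar_locally p_infty).

(* Main.v *)
Require Import Defs.
From Stdlib Require Import Reals Lra FunctionalExtensionality.
From Coquelicot Require Import Coquelicot.
Open Scope R_scope.

Lemma ballR (x e y : R) : Rabs (y - x) < e -> ball x e y.
Proof. intros H. exact H. Qed.
Lemma ballR' (x e y : R) : ball x e y -> Rabs (y - x) < e.
Proof. intros H. exact H. Qed.

Definition cont0 (f : R -> R) := forall x, 0 < x -> continuous f x.
Definition IL (f : R -> R) (l : R) := is_RInt_gen f (at_right 0) (at_point 1) l.
Definition IR (f : R -> R) (l : R) := is_RInt_gen f (at_point 1) (Rbar_locally p_infty) l.
Definition IG (f : R -> R) (l : R) := is_RInt_gen f (at_right 0) (Rbar_locally p_infty) l.

Lemma cont0_exRInt f a b : cont0 f -> 0 < a -> 0 < b -> ex_RInt f a b.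
Proof.
  intros Hf Ha Hb. apply (ex_RInt_continuous (V:=R_CompleteNormedModule)). intros z Hz. apply Hf.
  assert (0 < Rmin a b) by (apply Rmin_glb_lt; auto). lra.
Qed.

Lemma IL_of_lim f l : cont0 f ->
  filterlim (fun a => RInt f a 1) (at_right 0) (locally l) -> IL f l.
Proof.
  intros Hf Hl P HP. specialize (Hl P HP).
  destruct Hl as [d Hd].
  apply Filter_prod with (Q := fun a => 0 < a /\ a < d) (R := fun b => b = 1).
  - exists d. intros y Hy Hy0. apply ballR' in Hy. split; auto.
    rewrite Rminus_0_r, Rabs_pos_eq in Hy; lra.
  - reflexivity.
  - intros a b [Ha Had] Hb. subst b. simpl. exists (RInt f a 1). split.
    + apply (RInt_correct (V:=R_CompleteNormedModule)). apply cont0_exRInt; auto; lra.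
    + apply Hd; auto. apply ballR. rewrite Rminus_0_r, Rabs_pos_eq; lra.
Qed.

Lemma IL_to_lim f l : IL f l ->
  filterlim (fun a => RInt f a 1) (at_right 0) (locally l).
Proof.
  intros Hl P HP. specialize (Hl P HP). destruct Hl as [Q R HQ HR H].
  unfold at_point in HR.
  unfold filtermap; apply (filter_imp Q); [|exact HQ]. intros a Ha. destruct (H a 1 Ha HR) as [y [Hy Py]].
  simpl in Hy. rewrite (is_RInt_unique _ _ _ _ Hy). exact Py.
Qed.

Lemma IR_of_lim f l : cont0 f ->
  filterlim (fun b => RInt f 1 b) (Rbar_locally p_infty) (locally l) -> IR f l.
Proof.
  intros Hf Hl P HP. specialize (Hl P HP).
  destruct Hl as [M HM].
  apply Filter_prod with (R := fun b => M < b /\ 0 < b) (Q := fun a => a = 1).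
  - reflexivity.
  - exists (Rmax M 0). intros x Hx. split.
    + eapply Rle_lt_trans. apply Rmax_l. exact Hx.
    + eapply Rle_lt_trans. apply Rmax_r. exact Hx.
  - intros a b Ha [Hb Hb0]. subst a. simpl. exists (RInt f 1 b). split.
    + apply (RInt_correct (V:=R_CompleteNormedModule)). apply cont0_exRInt; auto; lra.
    + apply HM; auto.
Qed.

Lemma IR_to_lim f l : IR f l ->
  filterlim (fun b => RInt f 1 b) (Rbar_locally p_infty) (locally l).
Proof.
  intros Hl P HP. specialize (Hl P HP). destruct Hl as [Q R HQ HR H].
  unfold at_point in HQ.
  unfold filtermap; apply (filter_imp R); [|exact HR]. intros b Hb. destruct (H 1 b HQ Hb) as [y [Hy Py]].
  simpl in Hy. rewrite (is_RInt_unique _ _ _ _ Hy). exact Py.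
Qed.

Lemma mono_right0 (h : R -> R) (M : R) :
  (forall a b, 0 < a -> a <= b -> b <= 1 -> h b <= h a) ->
  (forall a, 0 < a -> a <= 1 -> h a <= M) ->
  exists l, filterlim h (at_right 0) (locally l) /\ (forall a, 0 < a -> a <= 1 -> h a <= l).
Proof.
  intros Hm HM.
  set (E := fun v => exists a, 0 < a /\ a <= 1 /\ v = h a).
  assert (Hb : bound E). { exists M. intros v [a [Ha [Ha1 ->]]]. apply HM; auto. }
  assert (He : exists v, E v). { exists (h 1). exists 1. repeat split; lra. }
  destruct (completeness E Hb He) as [l [Hub Hlub]].
  exists l. split.
  - intros P [eps HP].
    assert (Hex : exists a0, 0 < a0 /\ a0 <= 1 /\ l - eps < h a0).
    { apply Classical_Prop.NNPP. intros Hn.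
      assert (l <= l - eps). { apply Hlub. intros v [a [Ha [Ha1 ->]]].
        apply Rnot_lt_le. intros Hc. apply Hn. exists a. auto. }
      destruct eps; simpl in *; lra. }
    destruct Hex as [a0 [Ha0 [Ha01 Hh]]].
    exists (mkposreal a0 Ha0). intros y Hy Hy0. apply ballR' in Hy. simpl in Hy.
    rewrite Rminus_0_r, Rabs_pos_eq in Hy by lra.
    apply HP. apply ballR.
    assert (h a0 <= h y) by (apply Hm; lra).
    assert (h y <= l) by (apply Hub; exists y; repeat split; lra).
    rewrite Rabs_left1 by lra. lra.
  - intros a Ha Ha1. apply Hub. exists a. auto.
Qed.

Lemma mono_inf (h : R -> R) (M : R) :
  (forall a b, 1 <= a -> a <= b -> h a <= h b) ->
  (forall b, 1 <= b -> h b <= M) ->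
  exists l, filterlim h (Rbar_locally p_infty) (locally l) /\ (forall b, 1 <= b -> h b <= l).
Proof.
  intros Hm HM.
  set (E := fun v => exists a, 1 <= a /\ v = h a).
  assert (Hb : bound E). { exists M. intros v [a [Ha ->]]. apply HM; auto. }
  assert (He : exists v, E v). { exists (h 1). exists 1. split; lra. }
  destruct (completeness E Hb He) as [l [Hub Hlub]].
  exists l. split.
  - intros P [eps HP].
    assert (Hex : exists a0, 1 <= a0 /\ l - eps < h a0).
    { apply Classical_Prop.NNPP. intros Hn.
      assert (l <= l - eps). { apply Hlub. intros v [a [Ha ->]].
        apply Rnot_lt_le. intros Hc. apply Hn. exists a. auto. }
      destruct eps; simpl in *; lra. }
    destruct Hex as [a0 [Ha0 Hh]].
    exists a0. intros y Hy. 
    apply HP. apply ballR.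
    assert (h a0 <= h y) by (apply Hm; lra).
    assert (h y <= l) by (apply Hub; exists y; split; lra).
    rewrite Rabs_left1 by lra. lra.
  - intros a Ha. apply Hub. exists a. auto.
Qed.


Lemma cont0_plus f g : cont0 f -> cont0 g -> cont0 (fun x => f x + g x).
Proof. intros Hf Hg x Hx. apply (continuous_plus f g); auto. Qed.
Lemma cont0_mult f g : cont0 f -> cont0 g -> cont0 (fun x => f x * g x).
Proof. intros Hf Hg x Hx. apply (continuous_mult f g); auto. Qed.
Lemma cont0_scal (c : R) f : cont0 f -> cont0 (fun x => c * f x).
Proof. intros Hf x Hx. apply (continuous_mult (fun _ => c) f); auto. apply continuous_const. Qed.

Lemma RInt_mono_left f a a' b : cont0 f -> 0 < a' -> a' <= a -> a <= b ->
  (forall x, a' < x < a -> 0 <= f x) -> RInt f a b <= RInt f a' b.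
Proof.
  intros Hf Ha' Ha Hb Hpos.
  rewrite <- (RInt_Chasles f a' a b) by (apply cont0_exRInt; auto; lra).
  assert (0 <= RInt f a' a). { apply RInt_ge_0; auto. apply cont0_exRInt; auto; lra. }
  simpl. unfold plus; simpl. lra.
Qed.

Lemma RInt_mono_right f a b b' : cont0 f -> 0 < a -> a <= b -> b <= b' ->
  (forall x, b < x < b' -> 0 <= f x) -> RInt f a b <= RInt f a b'.
Proof.
  intros Hf Ha Hb Hb' Hpos.
  rewrite <- (RInt_Chasles f a b b') by (apply cont0_exRInt; auto; lra).
  assert (0 <= RInt f b b'). { apply RInt_ge_0; auto. apply cont0_exRInt; auto; lra. }
  simpl. unfold plus; simpl. lra.
Qed.

Lemma RInt_scalR (c : R) f a b : ex_RInt f a b -> RInt (fun x => c * f x) a b = c * RInt f a b.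
Proof. intros H. exact (RInt_scal (V:=R_CompleteNormedModule) f a b c H). Qed.

Lemma IL_partial f l : cont0 f -> (forall x, 0 < x <= 1 -> 0 <= f x) -> IL f l ->
  forall a, 0 < a -> a <= 1 -> RInt f a 1 <= l.
Proof.
  intros Hf Hp Hl a Ha Ha1.
  apply IL_to_lim in Hl.
  assert (H := filterlim_le (F := at_right 0) (fun _ => RInt f a 1) (fun a' => RInt f a' 1) (RInt f a 1) l).
  simpl in H. apply H; clear H.
  - exists (mkposreal a Ha). intros y Hy Hy0. apply ballR' in Hy. simpl in Hy.
    rewrite Rminus_0_r, Rabs_pos_eq in Hy by lra.
    apply RInt_mono_left; auto; try lra. intros; apply Hp; lra.
  - apply filterlim_const.
  - exact Hl.
Qed.

Lemma IR_partial f l : cont0 f -> (forall x, 1 <= x -> 0 <= f x) -> IR f l ->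
  forall b, 1 <= b -> RInt f 1 b <= l.
Proof.
  intros Hf Hp Hl b Hb.
  apply IR_to_lim in Hl.
  assert (H := filterlim_le (F := Rbar_locally p_infty) (fun _ => RInt f 1 b) (fun b' => RInt f 1 b') (RInt f 1 b) l).
  simpl in H. apply H; clear H.
  - exists b. intros y Hy. 
    apply RInt_mono_right; auto; try lra. intros; apply Hp; lra.
  - apply filterlim_const.
  - exact Hl.
Qed.

Lemma IL_mono f M : cont0 f -> (forall x, 0 < x <= 1 -> 0 <= f x) ->
  (forall a, 0 < a -> a <= 1 -> RInt f a 1 <= M) -> exists l, IL f l.
Proof.
  intros Hf Hp HM.
  destruct (mono_right0 (fun a => RInt f a 1) M) as [l [Hl _]].
  - intros a b Ha Hab Hb. apply RInt_mono_left; auto; try lra. intros; apply Hp; lra.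
  - exact HM.
  - exists l. apply IL_of_lim; auto.
Qed.

Lemma IR_mono f M : cont0 f -> (forall x, 1 <= x -> 0 <= f x) ->
  (forall b, 1 <= b -> RInt f 1 b <= M) -> exists l, IR f l.
Proof.
  intros Hf Hp HM.
  destruct (mono_inf (fun b => RInt f 1 b) M) as [l [Hl _]].
  - intros a b Ha Hab. apply RInt_mono_right; auto; try lra. intros; apply Hp; lra.
  - exact HM.
  - exists l. apply IR_of_lim; auto.
Qed.

Lemma minus_plus_fun (f g : R -> R) : (fun y => minus (f y + g y) (g y)) = f.
Proof. apply functional_extensionality. intros y. unfold minus, plus, opp; simpl. ring. Qed.

Lemma IL_cmp f g lg : cont0 f -> cont0 g -> (forall x, 0 < x <= 1 -> Rabs (f x) <= g x) ->
  IL g lg -> exists l, IL f l.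
Proof.
  intros Hf Hg Hb Hl.
  assert (Hgp : forall x, 0 < x <= 1 -> 0 <= g x).
  { intros x Hx. eapply Rle_trans. apply Rabs_pos. apply Hb; auto. }
  destruct (IL_mono (fun x => f x + g x) (2 * lg)) as [lh Hlh].
  - apply cont0_plus; auto.
  - intros x Hx. specialize (Hb x Hx). apply Rabs_le_between in Hb. lra.
  - intros a Ha Ha1.
    assert (RInt g a 1 <= lg) by (apply (IL_partial g); auto).
    assert (RInt (fun x => f x + g x) a 1 <= RInt (fun x => 2 * g x) a 1).
    { apply RInt_le; auto. apply cont0_exRInt; auto; try lra. apply cont0_plus; auto.
      apply cont0_exRInt; auto; try lra. apply cont0_scal; auto.
      intros x Hx. specialize (Hb x ltac:(lra)). apply Rabs_le_between in Hb. lra. }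
    rewrite RInt_scalR in H0 by (apply cont0_exRInt; auto; lra). lra.
  - exists (minus lh lg).
    assert (H := is_RInt_gen_minus _ _ _ _ Hlh Hl).
    cbv beta in H. rewrite minus_plus_fun in H. exact H.
Qed.

Lemma IR_cmp f g lg : cont0 f -> cont0 g -> (forall x, 1 <= x -> Rabs (f x) <= g x) ->
  IR g lg -> exists l, IR f l.
Proof.
  intros Hf Hg Hb Hl.
  assert (Hgp : forall x, 1 <= x -> 0 <= g x).
  { intros x Hx. eapply Rle_trans. apply Rabs_pos. apply Hb; auto. }
  destruct (IR_mono (fun x => f x + g x) (2 * lg)) as [lh Hlh].
  - apply cont0_plus; auto.
  - intros x Hx. specialize (Hb x Hx). apply Rabs_le_between in Hb. lra.
  - intros b Hb1.
    assert (RInt g 1 b <= lg) by (apply (IR_partial g); auto).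
    assert (RInt (fun x => f x + g x) 1 b <= RInt (fun x => 2 * g x) 1 b).
    { apply RInt_le; auto. apply cont0_exRInt; auto; try lra. apply cont0_plus; auto.
      apply cont0_exRInt; auto; try lra. apply cont0_scal; auto.
      intros x Hx. specialize (Hb x ltac:(lra)). apply Rabs_le_between in Hb. lra. }
    rewrite RInt_scalR in H0 by (apply cont0_exRInt; auto; lra). lra.
  - exists (minus lh lg).
    assert (H := is_RInt_gen_minus _ _ _ _ Hlh Hl).
    cbv beta in H. rewrite minus_plus_fun in H. exact H.
Qed.


Definition pe (p c z : R) := Rpower z p * exp (- (c * z)).

Lemma exd_cont (f : R -> R) x : ex_derive f x -> continuous f x.
Proof. intros H. exact (ex_derive_continuous (K:=R_AbsRing) (V:=R_NormedModule) f x H). Qed.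

Lemma cont0_pe p c : cont0 (pe p c).
Proof.
  intros z Hz. apply exd_cont. unfold pe, Rpower. auto_derive. lra.
Qed.

Lemma ln_le_minus1 y : 0 < y -> ln y <= y - 1.
Proof. intros Hy. pose proof (exp_ineq1_le (ln y)). rewrite exp_ln in H by auto. lra. Qed.

Lemma exp_le_exp x y : x <= y -> exp x <= exp y.
Proof. intros [H|H]. apply Rlt_le, exp_increasing; auto. subst; lra. Qed.

Lemma Rpower_1_base y : Rpower 1 y = 1.
Proof. unfold Rpower. rewrite ln_1, Rmult_0_r. apply exp_0. Qed.

Lemma Rpower_bound_exp p d : 0 < d -> exists K, 0 < K /\ forall z, 1 <= z -> Rpower z p <= K * exp (d * z).
Proof.
  intros Hd. destruct (Rle_lt_dec p 0) as [Hp|Hp].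
  - exists 1. split; [lra|]. intros z Hz. unfold Rpower. rewrite Rmult_1_l.
    apply exp_le_exp. assert (0 <= ln z). { rewrite <- ln_1. apply ln_le; lra. }
    assert (p * ln z <= 0) by (apply Rmult_nonpos_nonneg || nra; lra). nra.
  - exists (exp (p * (ln (p / d) - 1))). split. apply exp_pos.
    intros z Hz. unfold Rpower. rewrite <- exp_plus. apply exp_le_exp.
    assert (Hq : 0 < d * z / p) by (apply Rdiv_lt_0_compat; nra).
    pose proof (ln_le_minus1 _ Hq) as H1.
    assert (Hpd : 0 < p / d) by (apply Rdiv_lt_0_compat; lra).
    assert (ln z = ln (d * z / p) + ln (p / d)).
    { rewrite <- ln_mult by auto. f_equal. field. lra. }
    rewrite H.
    assert (p * (d * z / p - 1) = d * z - p) by (field; lra). nra.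
Qed.

Definition Int (f : R -> R) := cont0 f /\ (exists l, IL f l) /\ (exists l, IR f l).

Lemma IG_of f l0 l1 : IL f l0 -> IR f l1 -> IG f (l0 + l1).
Proof. intros H0 H1. exact (is_RInt_gen_Chasles f 1 l0 l1 H0 H1). Qed.

Lemma Int_IG f : Int f -> exists l, IG f l.
Proof. intros [_ [[l0 H0] [l1 H1]]]. exists (l0 + l1). apply IG_of; auto. Qed.

Lemma Int_cmp f g : Int g -> cont0 f -> (forall x, 0 < x -> Rabs (f x) <= g x) -> Int f.
Proof.
  intros [Hg [[l0 H0] [l1 H1]]] Hf Hb. split; [auto|split].
  - apply (IL_cmp f g l0); auto. intros; apply Hb; lra.
  - apply (IR_cmp f g l1); auto. intros; apply Hb; lra.
Qed.

Lemma Int_plus f g : Int f -> Int g -> Int (fun x => f x + g x).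
Proof.
  intros [Hf [[l0 H0] [l1 H1]]] [Hg [[m0 K0] [m1 K1]]]. split; [apply cont0_plus; auto|split].
  - exists (plus l0 m0). exact (is_RInt_gen_plus _ _ _ _ H0 K0).
  - exists (plus l1 m1). exact (is_RInt_gen_plus _ _ _ _ H1 K1).
Qed.

Lemma Int_scal c f : Int f -> Int (fun x => c * f x).
Proof.
  intros [Hf [[l0 H0] [l1 H1]]]. split; [apply cont0_scal; auto|split].
  - exists (scal c l0). exact (is_RInt_gen_scal _ c _ H0).
  - exists (scal c l1). exact (is_RInt_gen_scal _ c _ H1).
Qed.

Lemma Rpower_pos' z p : 0 < Rpower z p.
Proof. unfold Rpower. apply exp_pos. Qed.

Lemma pe_pos p c z : 0 < pe p c z.
Proof. unfold pe. apply Rmult_lt_0_compat. apply Rpower_pos'. apply exp_pos. Qed.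

Lemma Int_pe p c : -1 < p -> 0 < c -> Int (pe p c).
Proof.
  intros Hp Hc. split; [apply cont0_pe|split].
  - apply (IL_mono _ (/ (p + 1))). apply cont0_pe. intros; apply Rlt_le, pe_pos.
    intros a Ha Ha1.
    assert (Hd : forall x, 0 < x -> is_derive (fun z => Rpower z (p + 1) / (p + 1)) x (Rpower x p)).
    { intros x Hx. unfold Rpower. auto_derive. lra.
      replace ((p + 1) * ln x) with (p * ln x + ln x) by ring. rewrite exp_plus, exp_ln by auto. field. lra. }
    assert (HI : is_RInt (fun z => Rpower z p) a 1 (Rpower 1 (p + 1) / (p + 1) - Rpower a (p + 1) / (p + 1))).
    { apply (is_RInt_derive (V:=R_CompleteNormedModule) (fun z => Rpower z (p + 1) / (p + 1))).
      intros x Hx. apply Hd. assert (0 < Rmin a 1) by (apply Rmin_glb_lt; lra). lra.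
      intros x Hx. apply exd_cont. unfold Rpower. auto_derive. assert (0 < Rmin a 1) by (apply Rmin_glb_lt; lra). lra. }
    apply Rle_trans with (RInt (fun z => Rpower z p) a 1).
    + apply RInt_le; auto. apply cont0_exRInt; auto; try lra. apply cont0_pe.
      eexists; exact HI.
      intros x Hx. unfold pe. rewrite <- (Rmult_1_r (Rpower x p)) at 2. apply Rmult_le_compat_l.
      apply Rlt_le, Rpower_pos'. rewrite <- exp_0. apply exp_le_exp. nra.
    + rewrite (is_RInt_unique _ _ _ _ HI). rewrite Rpower_1_base.
      pose proof (Rpower_pos' a (p + 1)).
      assert (0 < /(p+1)) by (apply Rinv_0_lt_compat; lra).
      unfold Rdiv. nra.
  - destruct (Rpower_bound_exp p (c / 2)) as [K [HK HKb]]. lra.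
    apply (IR_mono _ (K * (2 / c) * exp (- (c / 2)))). apply cont0_pe. intros; apply Rlt_le, pe_pos.
    intros b Hb.
    assert (HI : is_RInt (fun z => K * exp (- (c / 2 * z))) 1 b
                   ((- K * (2 / c) * exp (- (c / 2 * b))) - (- K * (2 / c) * exp (- (c / 2 * 1))))).
    { apply (is_RInt_derive (V:=R_CompleteNormedModule) (fun z => - K * (2 / c) * exp (- (c / 2 * z)))).
      intros x Hx. auto_derive. auto. field. lra.
      intros x Hx. apply exd_cont. auto_derive. auto. }
    apply Rle_trans with (RInt (fun z => K * exp (- (c / 2 * z))) 1 b).
    + apply RInt_le; auto. apply cont0_exRInt; auto; try lra. apply cont0_pe.
      eexists; exact HI.
      intros x Hx. unfold pe. 
      assert (exp (- (c * x)) = exp (- (c / 2 * x)) * exp (- (c / 2 * x))).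
      { rewrite <- exp_plus. f_equal. field. }
      rewrite H. specialize (HKb x ltac:(lra)).
      assert (exp (c / 2 * x) * exp (- (c / 2 * x)) = 1).
      { rewrite <- exp_plus, <- exp_0. f_equal. ring. }
      assert (exp (- (c / 2 * x)) <= 1). { rewrite <- exp_0. apply exp_le_exp. nra. }
      pose proof (exp_pos (- (c / 2 * x))). pose proof (exp_pos (c / 2 * x)).
      pose proof (Rpower_pos' x p).
      set (E := exp (- (c / 2 * x))) in *.
      apply Rle_trans with (K * exp (c / 2 * x) * (E * E)).
      apply Rmult_le_compat_r. nra. lra.
      replace (K * exp (c / 2 * x) * (E * E)) with (K * E * (exp (c / 2 * x) * E)) by ring.
      rewrite H0. lra.
    + rewrite (is_RInt_unique _ _ _ _ HI). 
      pose proof (exp_pos (- (c / 2 * b))).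
      assert (0 < 2 / c) by (apply Rdiv_lt_0_compat; lra).
      assert (0 < K * (2 / c) * exp (- (c / 2 * b))) by (repeat apply Rmult_lt_0_compat; auto; lra).
      replace (c / 2 * 1) with (c / 2) by ring. lra.
Qed.


Lemma fp_pos : filter_prod (at_right 0) (Rbar_locally p_infty)
   (fun ab : R * R => 0 < fst ab /\ fst ab <= snd ab).
Proof.
  apply Filter_prod with (Q := fun a => 0 < a /\ a < 1) (R := fun b => 1 < b).
  - exists (mkposreal 1 Rlt_0_1). intros y Hy Hy0. apply ballR' in Hy. simpl in Hy.
    rewrite Rminus_0_r, Rabs_pos_eq in Hy by lra. lra.
  - exists 1. auto.
  - intros a b Ha Hb. simpl. lra.
Qed.

Lemma IG_unique f l : IG f l -> RInt_gen f (at_right 0) (Rbar_locally p_infty) = l.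
Proof. intros H. exact (is_RInt_gen_unique f l H). Qed.

Lemma IG_ext f g l : (forall x, 0 < x -> f x = g x) -> IG f l -> IG g l.
Proof.
  intros He H. apply (is_RInt_gen_ext f g l); auto.
  apply (filter_imp (fun ab : R * R => 0 < fst ab /\ fst ab <= snd ab)); [|apply fp_pos].
  intros [a b] [Ha Hab] x Hx. simpl in *. apply He.
  rewrite Rmin_left in Hx by auto. lra.
Qed.

Lemma IG_plus f g lf lg : IG f lf -> IG g lg -> IG (fun x => f x + g x) (lf + lg).
Proof. intros H1 H2. exact (is_RInt_gen_plus _ _ _ _ H1 H2). Qed.
Lemma IG_minus f g lf lg : IG f lf -> IG g lg -> IG (fun x => f x - g x) (lf - lg).
Proof. intros H1 H2. exact (is_RInt_gen_minus _ _ _ _ H1 H2). Qed.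
Lemma IG_scal c f lf : IG f lf -> IG (fun x => c * f x) (c * lf).
Proof. intros H1. exact (is_RInt_gen_scal _ c _ H1). Qed.

Lemma IG_norm f g lf lg : (forall x, 0 < x -> Rabs (f x) <= g x) -> IG f lf -> IG g lg -> Rabs lf <= lg.
Proof.
  intros Hb Hf Hg.
  apply (RInt_gen_norm (V:=R_CompleteNormedModule) (Fa:=at_right 0) (Fb:=Rbar_locally p_infty) f g lf lg); auto.
  - apply (filter_imp (fun ab : R * R => 0 < fst ab /\ fst ab <= snd ab)); [|apply fp_pos].
    intros ab [H1 H2]; auto.
  - apply (filter_imp (fun ab : R * R => 0 < fst ab /\ fst ab <= snd ab)); [|apply fp_pos].
    intros ab [H1 H2] x Hx. apply Hb. lra.
Qed.

Lemma IG_le f g lf lg : (forall x, 0 < x -> f x <= g x) -> IG f lf -> IG g lg -> lf <= lg.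
Proof.
  intros Hb Hf Hg.
  assert (H := IG_minus g f lg lf Hg Hf).
  assert (H0 : IG (fun x => 0 * f x) (0 * lf)) by (apply IG_scal; auto).
  assert (Rabs (0 * lf) <= lg - lf).
  { apply (IG_norm (fun x => 0 * f x) (fun x => g x - f x)); auto.
    intros x Hx. rewrite Rmult_0_l, Rabs_R0. specialize (Hb x Hx). lra. }
  pose proof (Rabs_pos (0 * lf)). lra.
Qed.

Lemma Int_IL_IR f : Int f -> forall l, IG f l -> exists l0 l1, IL f l0 /\ IR f l1 /\ l = l0 + l1.
Proof.
  intros [Hc [[l0 H0] [l1 H1]]] l Hl. exists l0, l1. repeat split; auto.
  rewrite <- (IG_unique f l Hl). apply IG_unique. apply IG_of; auto.
Qed.

Lemma IG_partial f l : Int f -> (forall x, 0 < x -> 0 <= f x) -> IG f l ->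
  forall a b, 0 < a -> a <= b -> RInt f a b <= l.
Proof.
  intros HI Hp Hl a b Ha Hab.
  destruct (Int_IL_IR f HI l Hl) as [l0 [l1 [H0 [H1 ->]]]].
  destruct HI as [Hc _].
  set (a' := Rmin a 1). set (b' := Rmax b 1).
  assert (Ha' : 0 < a') by (apply Rmin_glb_lt; lra).
  assert (a' <= a) by apply Rmin_l. assert (a' <= 1) by apply Rmin_r.
  assert (b <= b') by apply Rmax_l. assert (1 <= b') by apply Rmax_r.
  apply Rle_trans with (RInt f a' b').
  - apply Rle_trans with (RInt f a' b).
    + apply RInt_mono_left; auto. intros; apply Hp; lra.
    + apply RInt_mono_right; auto; try lra. intros; apply Hp; lra.
  - rewrite <- (RInt_Chasles f a' 1 b') by (apply cont0_exRInt; auto; lra).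
    simpl; unfold plus; simpl.
    assert (RInt f a' 1 <= l0) by (apply (IL_partial f); auto; intros; apply Hp; lra).
    assert (RInt f 1 b' <= l1) by (apply (IR_partial f); auto; intros; apply Hp; lra).
    lra.
Qed.



Lemma mvt_bound (f df : R -> R) (x0 x M : R) :
  (forall y, Rmin x0 x <= y <= Rmax x0 x -> is_derive f y (df y)) ->
  (forall y, Rmin x0 x <= y <= Rmax x0 x -> Rabs (df y) <= M) ->
  Rabs (f x - f x0) <= M * Rabs (x - x0).
Proof.
  intros Hd Hb.
  destruct (MVT_gen f x0 x df) as [c [Hc Heq]].
  - intros y Hy. apply Hd. lra.
  - intros y Hy. apply continuity_pt_filterlim. apply exd_cont. eexists; apply Hd; auto.
  - rewrite Heq, Rabs_mult. apply Rmult_le_compat_r. apply Rabs_pos. apply Hb; auto.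
Qed.

Lemma Rabs_between x0 x y : Rmin x0 x <= y <= Rmax x0 x -> Rabs (y - x0) <= Rabs (x - x0).
Proof.
  intros [H1 H2]. unfold Rmin, Rmax in *. destruct (Rle_dec x0 x);
  unfold Rabs; repeat destruct Rcase_abs; lra.
Qed.

Lemma diff_IG (phi psi chi : R -> R -> R) (K : R -> R) (Hv : R -> R) (x0 d Lpsi lK : R) :
  0 < d ->
  (forall x, Rabs (x - x0) < d -> IG (phi x) (Hv x)) ->
  IG (psi x0) Lpsi ->
  IG K lK ->
  (forall z, 0 < z -> forall x, Rabs (x - x0) < d -> is_derive (fun y => phi y z) x (psi x z)) ->
  (forall z, 0 < z -> forall x, Rabs (x - x0) < d -> is_derive (fun y => psi y z) x (chi x z)) ->
  (forall z, 0 < z -> forall x, Rabs (x - x0) < d -> Rabs (chi x z) <= K z) ->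
  is_derive Hv x0 Lpsi.
Proof.
  intros Hd HIphi HIpsi HIK Hd1 Hd2 Hb.
  assert (Hlip : forall z, 0 < z -> forall x, Rabs (x - x0) < d ->
            Rabs (psi x z - psi x0 z) <= K z * Rabs (x - x0)).
  { intros z Hz x Hx. apply (mvt_bound (fun y => psi y z) (fun y => chi y z)).
    - intros y Hy. apply Hd2; auto. pose proof (Rabs_between x0 x y Hy). lra.
    - intros y Hy. apply Hb; auto. pose proof (Rabs_between x0 x y Hy). lra. }
  assert (HK0 : forall z, 0 < z -> 0 <= K z).
  { intros z Hz. eapply Rle_trans. apply Rabs_pos. apply (Hb z Hz x0). rewrite Rminus_diag, Rabs_R0. lra. }
  assert (HlK : 0 <= lK).
  { rewrite <- (Rmult_0_l lK) at 1. apply (IG_le (fun x => 0 * K x) K (0 * lK) lK); auto. intros x Hx. rewrite Rmult_0_l. auto.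
    apply IG_scal; auto. }
  apply is_derive_Reals. intros eps Heps.
  set (del := Rmin d (eps / (lK + 1))).
  assert (Hdel : 0 < del). { apply Rmin_glb_lt; auto. apply Rdiv_lt_0_compat; lra. }
  exists (mkposreal del Hdel). intros h Hh0 Hh. simpl in Hh.
  assert (Hhd : Rabs h < d). { eapply Rlt_le_trans. exact Hh. apply Rmin_l. }
  assert (Hhe : Rabs h < eps / (lK + 1)). { eapply Rlt_le_trans. exact Hh. apply Rmin_r. }
  set (E := fun z => (phi (x0 + h) z - phi x0 z) / h - psi x0 z).
  assert (HE : IG E ((Hv (x0 + h) - Hv x0) / h - Lpsi)).
  { apply IG_minus; auto. unfold Rdiv.
    apply (IG_ext (fun z => / h * (phi (x0 + h) z - phi x0 z))).
    intros; ring.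
    replace ((Hv (x0 + h) - Hv x0) * / h) with (/ h * (Hv (x0 + h) - Hv x0)) by ring.
    apply IG_scal. apply IG_minus; apply HIphi. replace (x0 + h - x0) with h by ring; auto.
    rewrite Rminus_diag, Rabs_R0; auto. }
  assert (HEb : forall z, 0 < z -> Rabs (E z) <= Rabs h * K z).
  { intros z Hz. unfold E.
    assert (Hm : Rabs ((fun y => phi y z - y * psi x0 z) (x0 + h) - (fun y => phi y z - y * psi x0 z) x0)
                 <= (Rabs h * K z) * Rabs (x0 + h - x0)).
    { apply (mvt_bound (fun y => phi y z - y * psi x0 z) (fun y => psi y z - psi x0 z) x0 (x0 + h)).
      - intros y Hy. pose proof (Rabs_between x0 (x0 + h) y Hy).
        replace (x0 + h - x0) with h in H by ring.
        apply (is_derive_minus (fun y => phi y z) (fun y => y * psi x0 z)).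
        apply Hd1; auto; lra.
        auto_derive; [auto|ring].
      - intros y Hy. pose proof (Rabs_between x0 (x0 + h) y Hy).
        replace (x0 + h - x0) with h in H by ring.
        eapply Rle_trans. apply Hlip; auto; lra. rewrite Rmult_comm.
        apply Rmult_le_compat_r; auto. }
    simpl in Hm. replace (x0 + h - x0) with h in Hm by ring.
    replace ((phi (x0 + h) z - phi x0 z) / h - psi x0 z) with
      ((phi (x0 + h) z - (x0 + h) * psi x0 z - (phi x0 z - x0 * psi x0 z)) / h) by (field; auto).
    unfold Rdiv. rewrite Rabs_mult, Rabs_inv.
    apply Rle_trans with (Rabs h * K z * Rabs h * / Rabs h).
    apply Rmult_le_compat_r. apply Rlt_le, Rinv_0_lt_compat, Rabs_pos_lt; auto. exact Hm.
    right. field. apply Rabs_no_R0; auto. }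
  assert (Hn : Rabs ((Hv (x0 + h) - Hv x0) / h - Lpsi) <= Rabs h * lK).
  { apply (IG_norm E (fun z => Rabs h * K z)); auto. apply IG_scal; auto. }
  apply Rle_lt_trans with (Rabs h * lK). exact Hn.
  apply Rle_lt_trans with (eps / (lK + 1) * lK).
  apply Rmult_le_compat_r; auto; lra.
  apply Rlt_le_trans with (eps / (lK + 1) * (lK + 1)).
  apply Rmult_lt_compat_l. apply Rdiv_lt_0_compat; lra. lra.
  right. field. lra.
Qed.


Lemma Rpower_le_sum t q1 q q2 : 0 < t -> q1 <= q <= q2 -> Rpower t q <= Rpower t q1 + Rpower t q2.
Proof.
  intros Ht Hq. pose proof (Rpower_pos' t q1). pose proof (Rpower_pos' t q2).
  unfold Rpower in *. destruct (Rle_dec (ln t) 0).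
  - assert (exp (q * ln t) <= exp (q1 * ln t)) by (apply exp_le_exp; nra). lra.
  - assert (exp (q * ln t) <= exp (q2 * ln t)) by (apply exp_le_exp; nra). lra.
Qed.

Lemma ln_abs_bound t e : 0 < t -> 0 < e -> Rabs (ln t) <= (Rpower t e + Rpower t (- e)) / e.
Proof.
  intros Ht He. pose proof (Rpower_pos' t e). pose proof (Rpower_pos' t (-e)).
  pose proof (exp_ineq1_le (e * ln t)). pose proof (exp_ineq1_le (- e * ln t)).
  unfold Rpower in *.
  apply Rabs_le. split.
  - apply Rmult_le_reg_l with e; auto. field_simplify; [|lra]. lra.
  - apply Rmult_le_reg_l with e; auto. field_simplify; [|lra]. lra.
Qed.

Lemma ln_sq_bound t e : 0 < t -> 0 < e -> ln t * ln t <= 2 * (Rpower t (2 * e) + Rpower t (- (2 * e))) / (e * e).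
Proof.
  intros Ht He. pose proof (ln_abs_bound t e Ht He).
  pose proof (Rpower_pos' t e). pose proof (Rpower_pos' t (-e)).
  assert (Rpower t (2 * e) = Rpower t e * Rpower t e) by (rewrite <- Rpower_plus; f_equal; ring).
  assert (Rpower t (- (2 * e)) = Rpower t (- e) * Rpower t (- e)) by (rewrite <- Rpower_plus; f_equal; ring).
  rewrite H2, H3. 
  assert (ln t * ln t = Rabs (ln t) * Rabs (ln t)) by (rewrite <- Rabs_mult; rewrite Rabs_pos_eq; nra).
  rewrite H4. set (A := Rpower t e) in *. set (B := Rpower t (-e)) in *.
  apply Rle_trans with ((A + B) / e * ((A + B) / e)).
  apply Rmult_le_compat; auto using Rabs_pos.
  unfold Rdiv. replace ((A + B) * / e * ((A + B) * / e)) with ((A + B) * (A + B) * / (e * e)) by (field; lra).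
  apply Rmult_le_compat_r. apply Rlt_le, Rinv_0_lt_compat. nra. pose proof (Rle_0_sqr (A - B)). unfold Rsqr in *. nra.
Qed.

Definition gk (a t : R) := Rpower t (a - 1) * exp (- t).

Lemma cont0_gk a : cont0 (gk a).
Proof. intros z Hz. apply exd_cont. unfold gk, Rpower. auto_derive. lra. Qed.

Lemma gk_pe a t : gk a t = pe (a - 1) 1 t.
Proof. unfold gk, pe. rewrite Rmult_1_l. auto. Qed.

Lemma Int_gk a : 0 < a -> Int (gk a).
Proof.
  intros Ha. apply (Int_cmp _ (pe (a - 1) 1)). apply Int_pe; lra.
  apply cont0_gk. intros x Hx. rewrite gk_pe. rewrite Rabs_pos_eq. lra. apply Rlt_le, pe_pos.
Qed.

Lemma IG_Gamma a : 0 < a -> IG (gk a) (Gamma a).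
Proof.
  intros Ha. destruct (Int_IG _ (Int_gk a Ha)) as [l Hl].
  unfold Gamma. fold (gk a). rewrite (IG_unique _ _ Hl). auto.
Qed.

Lemma Gamma_pos a : 0 < a -> 0 < Gamma a.
Proof.
  intros Ha. apply Rlt_le_trans with (RInt (gk a) 1 2).
  - apply RInt_gt_0. lra. intros x Hx. unfold gk. apply Rmult_lt_0_compat. apply Rpower_pos'. apply exp_pos.
    intros x Hx. apply cont0_gk. lra.
  - apply (IG_partial (gk a)); auto using Int_gk, IG_Gamma; try lra.
    intros x Hx. unfold gk. apply Rlt_le, Rmult_lt_0_compat. apply Rpower_pos'. apply exp_pos.
Qed.

Lemma pe_mul p q c t : Rpower t q * pe p c t = pe (p + q) c t.
Proof. unfold pe. rewrite Rpower_plus. ring. Qed.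

Lemma Int_lngk a : 0 < a -> Int (fun t => ln t * gk a t).
Proof.
  intros Ha. set (e := a / 2).
  apply (Int_cmp _ (fun t => / e * (pe (a - 1 + e) 1 t + pe (a - 1 + - e) 1 t))).
  - apply Int_scal, Int_plus; apply Int_pe; unfold e; lra.
  - apply cont0_mult. intros x Hx. apply continuous_ln; auto. apply cont0_gk.
  - intros t Ht. rewrite Rabs_mult. rewrite (Rabs_pos_eq (gk a t)).
    2:{ unfold gk. apply Rlt_le, Rmult_lt_0_compat. apply Rpower_pos'. apply exp_pos. }
    assert (He : 0 < e) by (unfold e; lra).
    pose proof (ln_abs_bound t e Ht He).
    rewrite <- !pe_mul, <- gk_pe.
    apply Rle_trans with ((Rpower t e + Rpower t (- e)) / e * gk a t).
    apply Rmult_le_compat_r; auto. unfold gk. apply Rlt_le, Rmult_lt_0_compat. apply Rpower_pos'. apply exp_pos.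
    right. unfold Rdiv. ring.
Qed.

Definition J (a : R) := RInt_gen (fun t => ln t * gk a t) (at_right 0) (Rbar_locally p_infty).

Lemma IG_J a : 0 < a -> IG (fun t => ln t * gk a t) (J a).
Proof.
  intros Ha. destruct (Int_IG _ (Int_lngk a Ha)) as [l Hl].
  unfold J. rewrite (IG_unique _ _ Hl). auto.
Qed.

Lemma Gamma_derive a : 0 < a -> is_derive Gamma a (J a).
Proof.
  intros Ha. set (e := a / 8).
  assert (He : 0 < e) by (unfold e; lra).
  set (K := fun t => 2 / (e * e) * ((pe (a / 2 - 1 + 2 * e) 1 t + pe (3 * a / 2 - 1 + 2 * e) 1 t)
                                 + (pe (a / 2 - 1 + - (2 * e)) 1 t + pe (3 * a / 2 - 1 + - (2 * e)) 1 t))).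
  assert (HK : Int K).
  { unfold K. apply Int_scal. apply Int_plus; apply Int_plus; apply Int_pe; unfold e; lra. }
  destruct (Int_IG K HK) as [lK HlK].
  apply (diff_IG gk (fun a t => ln t * gk a t) (fun a t => ln t * (ln t * gk a t)) K Gamma a (a / 2) (J a) lK).
  - lra.
  - intros x Hx. apply IG_Gamma. apply Rabs_lt_between in Hx. lra.
  - apply IG_J; auto.
  - exact HlK.
  - intros z Hz x Hx. unfold gk, Rpower. auto_derive. auto. unfold Rminus. ring.
  - intros z Hz x Hx. unfold gk, Rpower. auto_derive. auto. unfold Rminus. ring.
  - intros z Hz x Hx. apply Rabs_lt_between in Hx.
    assert (Hg : 0 < gk x z) by (unfold gk; apply Rmult_lt_0_compat; [apply Rpower_pos'|apply exp_pos]).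
    rewrite <- Rmult_assoc, Rabs_pos_eq.
    2:{ apply Rmult_le_pos. apply Rle_0_sqr. lra. }
    pose proof (ln_sq_bound z e Hz He).
    assert (gk x z <= gk (a / 2) z + gk (3 * a / 2) z).
    { unfold gk. rewrite <- Rmult_plus_distr_r. apply Rmult_le_compat_r. apply Rlt_le, exp_pos.
      apply Rpower_le_sum; auto. lra. }
    apply Rle_trans with (2 * (Rpower z (2 * e) + Rpower z (- (2 * e))) / (e * e) * (gk (a / 2) z + gk (3 * a / 2) z)).
    apply Rmult_le_compat; auto. apply Rle_0_sqr. lra.
    unfold K. rewrite <- !pe_mul, !gk_pe. right.
    replace (a / 2 - 1 + 2 * e) with (a / 2 - 1 + 2 * e) by ring. unfold Rdiv. ring.
Qed.


Lemma gpdf_pos a z : 0 < z -> gamma_pdf a z = gk a z / Gamma a.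
Proof. intros Hz. unfold gamma_pdf. destruct (Rlt_dec 0 z); [|lra]. unfold gk. auto. Qed.

Lemma gpdf_nonneg a z : 0 < a -> 0 <= gamma_pdf a z.
Proof.
  intros Ha. unfold gamma_pdf. destruct (Rlt_dec 0 z); [|lra].
  apply Rlt_le, Rdiv_lt_0_compat. apply Rmult_lt_0_compat. apply Rpower_pos'. apply exp_pos.
  apply Gamma_pos; auto.
Qed.

Lemma cont0_gpdf a : cont0 (gamma_pdf a).
Proof.
  intros z Hz. apply (continuous_ext_loc _ (fun t => gk a t / Gamma a)).
  - exists (mkposreal z Hz). intros y Hy. apply ballR' in Hy. simpl in Hy.
    rewrite gpdf_pos; auto. apply Rabs_lt_between in Hy. lra.
  - apply exd_cont. unfold gk, Rpower. auto_derive. lra.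
Qed.

Lemma Int_gpdf a : 0 < a -> Int (gamma_pdf a).
Proof.
  intros Ha. apply (Int_cmp _ (fun t => / Gamma a * gk a t)).
  apply Int_scal, Int_gk; auto. apply cont0_gpdf.
  intros x Hx. rewrite Rabs_pos_eq by (apply gpdf_nonneg; auto). rewrite gpdf_pos by auto.
  right. unfold Rdiv. ring.
Qed.

Lemma IG_gpdf a : 0 < a -> IG (gamma_pdf a) 1.
Proof.
  intros Ha. pose proof (Gamma_pos a Ha).
  replace 1 with (/ Gamma a * Gamma a) by (field; lra).
  apply (IG_ext (fun t => / Gamma a * gk a t)).
  intros x Hx. rewrite gpdf_pos by auto. unfold Rdiv. ring.
  apply IG_scal, IG_Gamma; auto.
Qed.

Definition L0 a := RInt_gen (gamma_pdf a) (at_right 0) (at_point 1).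
Definition L1 a := RInt_gen (gamma_pdf a) (at_point 1) (Rbar_locally p_infty).

Lemma IL_L0 a : 0 < a -> IL (gamma_pdf a) (L0 a).
Proof.
  intros Ha. destruct (Int_gpdf a Ha) as [_ [[l H] _]].
  unfold L0. rewrite (is_RInt_gen_unique _ _ H). auto.
Qed.

Lemma IR_L1 a : 0 < a -> IR (gamma_pdf a) (L1 a).
Proof.
  intros Ha. destruct (Int_gpdf a Ha) as [_ [_ [l H]]].
  unfold L1. rewrite (is_RInt_gen_unique _ _ H). auto.
Qed.

Lemma L0_L1 a : 0 < a -> L0 a + L1 a = 1.
Proof.
  intros Ha. rewrite <- (IG_unique _ _ (IG_gpdf a Ha)). symmetry.
  apply IG_unique. apply IG_of. apply IL_L0; auto. apply IR_L1; auto.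
Qed.

Lemma L0_nonneg a : 0 < a -> 0 <= L0 a.
Proof.
  intros Ha. apply Rle_trans with (RInt (gamma_pdf a) 1 1).
  rewrite RInt_point. right; auto.
  apply (IL_partial (gamma_pdf a)); try lra. apply cont0_gpdf. intros; apply gpdf_nonneg; auto. apply IL_L0; auto.
Qed.

Lemma L1_nonneg a : 0 < a -> 0 <= L1 a.
Proof.
  intros Ha. apply Rle_trans with (RInt (gamma_pdf a) 1 1).
  rewrite RInt_point. right; auto.
  apply (IR_partial (gamma_pdf a)); try lra. apply cont0_gpdf. intros; apply gpdf_nonneg; auto. apply IR_L1; auto.
Qed.

Lemma gcdf_pos a y : 0 < a -> 0 < y -> gamma_cdf a y = L0 a + RInt (gamma_pdf a) 1 y.
Proof.
  intros Ha Hy. unfold gamma_cdf. destruct (Rlt_dec 0 y); [|lra].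
  apply is_RInt_gen_unique.
  apply (is_RInt_gen_Chasles (Fa := at_right 0) (Fc := at_point y) (gamma_pdf a) 1 (L0 a) (RInt (gamma_pdf a) 1 y)).
  apply IL_L0; auto.
  apply is_RInt_gen_at_point. apply (RInt_correct (V:=R_CompleteNormedModule)).
  apply cont0_exRInt; auto. apply cont0_gpdf. lra.
Qed.

Lemma lim_shift {T} (F : (T -> Prop) -> Prop) {FF : Filter F} (f g : T -> R) l c :
  filterlim f F (locally l) -> F (fun x => g x = f x + c) -> filterlim g F (locally (l + c)).
Proof.
  intros Hf He. apply filterlim_locally. intros eps.
  apply (proj1 (filterlim_locally f l)) with (eps := eps) in Hf.
  apply (filter_imp (fun x => ball l eps (f x) /\ g x = f x + c)); [|apply filter_and; auto].
  intros x [Hb Hgx]. apply ballR' in Hb. apply ballR. rewrite Hgx.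
  replace (f x + c - (l + c)) with (f x - l) by ring. auto.
Qed.

Lemma RInt_Ch (f : R -> R) a b c : ex_RInt f a b -> ex_RInt f b c -> RInt f a c = RInt f a b + RInt f b c.
Proof. intros H1 H2. symmetry. exact (RInt_Chasles (V:=R_CompleteNormedModule) f a b c H1 H2). Qed.

Lemma gcdf_derive a y : 0 < a -> 0 < y -> is_derive (gamma_cdf a) y (gamma_pdf a y).
Proof.
  intros Ha Hy.
  apply (is_derive_ext_loc (fun t => L0 a + RInt (gamma_pdf a) 1 t)).
  - exists (mkposreal y Hy). intros t Ht. apply ballR' in Ht. simpl in Ht. apply Rabs_lt_between in Ht.
    rewrite gcdf_pos; auto. lra.
  - replace (gamma_pdf a y) with (plus zero (gamma_pdf a y)) by (rewrite plus_zero_l; auto).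
    apply (is_derive_plus (fun _ => L0 a) (fun t => RInt (gamma_pdf a) 1 t)).
    apply (is_derive_const (K:=R_AbsRing) (V:=R_NormedModule)).
    apply (is_derive_RInt (V:=R_NormedModule) (gamma_pdf a) (fun t => RInt (gamma_pdf a) 1 t) 1 y).
    + exists (mkposreal y Hy). intros t Ht. apply ballR' in Ht. simpl in Ht. apply Rabs_lt_between in Ht.
      apply (RInt_correct (V:=R_CompleteNormedModule)). apply cont0_exRInt. apply cont0_gpdf. lra. lra.
    + apply cont0_gpdf; auto.
Qed.

Lemma gcdf_bounds a y : 0 < a -> 0 <= gamma_cdf a y <= 1.
Proof.
  intros Ha. destruct (Rlt_dec 0 y) as [Hy|Hy].
  2:{ unfold gamma_cdf. destruct (Rlt_dec 0 y); [lra|]. lra. }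
  rewrite gcdf_pos by auto.
  pose proof (L0_L1 a Ha). pose proof (L0_nonneg a Ha). pose proof (L1_nonneg a Ha).
  assert (Hc : cont0 (gamma_pdf a)) by apply cont0_gpdf.
  destruct (Rle_dec y 1) as [Hy1|Hy1].
  - assert (RInt (gamma_pdf a) 1 y = - RInt (gamma_pdf a) y 1).
    { assert (RInt (gamma_pdf a) y y = RInt (gamma_pdf a) y 1 + RInt (gamma_pdf a) 1 y)
        by (apply RInt_Ch; apply cont0_exRInt; auto; lra).
      rewrite RInt_point in H2. simpl in H2. unfold zero in H2; simpl in H2. lra. }
    rewrite H2.
    assert (RInt (gamma_pdf a) y 1 <= L0 a).
    { apply (IL_partial (gamma_pdf a) (L0 a)); auto; try lra. intros; apply gpdf_nonneg; auto. apply IL_L0; auto. }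
    assert (0 <= RInt (gamma_pdf a) y 1) by (apply RInt_ge_0; auto; [apply cont0_exRInt; auto; lra| intros; apply gpdf_nonneg; auto]).
    lra.
  - assert (RInt (gamma_pdf a) 1 y <= L1 a).
    { apply (IR_partial (gamma_pdf a) (L1 a)); auto; try lra. intros; apply gpdf_nonneg; auto. apply IR_L1; auto. }
    assert (0 <= RInt (gamma_pdf a) 1 y) by (apply RInt_ge_0; try lra; [apply cont0_exRInt; auto; lra| intros; apply gpdf_nonneg; auto]).
    lra.
Qed.

Lemma gcdf_lim0 a y : 0 < a -> 0 < y ->
  filterlim (fun b => RInt (gamma_pdf a) b y) (at_right 0) (locally (gamma_cdf a y)).
Proof.
  intros Ha Hy. rewrite gcdf_pos by auto.
  apply (lim_shift _ (fun b => RInt (gamma_pdf a) b 1)).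
  apply IL_to_lim, IL_L0; auto.
  exists (mkposreal 1 Rlt_0_1). intros b _ Hb. apply RInt_Ch; apply cont0_exRInt; auto; try apply cont0_gpdf; lra.
Qed.

Lemma gcdf_le_pow a y : 0 < a -> 0 < y -> gamma_cdf a y <= Rpower y a / (a * Gamma a).
Proof.
  intros Ha Hy. pose proof (Gamma_pos a Ha) as HG.
  assert (H := filterlim_le (F := at_right 0) (fun b => RInt (gamma_pdf a) b y) (fun _ => Rpower y a / (a * Gamma a))
      (gamma_cdf a y) (Rpower y a / (a * Gamma a))).
  simpl in H. apply H; clear H.
  - exists (mkposreal y Hy). intros b Hb Hb0. apply ballR' in Hb. simpl in Hb.
    rewrite Rminus_0_r, Rabs_pos_eq in Hb by lra.
    assert (HI : is_RInt (fun t => Rpower t (a - 1) / Gamma a) b y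
                   (Rpower y a / (a * Gamma a) - Rpower b a / (a * Gamma a))).
    { apply (is_RInt_derive (V:=R_CompleteNormedModule) (fun t => Rpower t a / (a * Gamma a))).
      - intros x Hx. rewrite Rmin_left, Rmax_right in Hx by lra.
        unfold Rpower. auto_derive. lra.
        replace (a * ln x) with ((a - 1) * ln x + ln x) by ring. rewrite exp_plus, exp_ln by lra.
        field. split; lra.
      - intros x Hx. rewrite Rmin_left, Rmax_right in Hx by lra. apply exd_cont. unfold Rpower. auto_derive. lra. }
    apply Rle_trans with (RInt (fun t => Rpower t (a - 1) / Gamma a) b y).
    + apply RInt_le; try lra. apply cont0_exRInt; auto; try lra. apply cont0_gpdf.
      eexists; exact HI.
      intros x Hx. rewrite gpdf_pos by lra. unfold gk, Rdiv.
      apply Rmult_le_compat_r. apply Rlt_le, Rinv_0_lt_compat; auto.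
      rewrite <- (Rmult_1_r (Rpower x (a - 1))) at 2. apply Rmult_le_compat_l. apply Rlt_le, Rpower_pos'.
      rewrite <- exp_0. apply exp_le_exp. lra.
    + rewrite (is_RInt_unique _ _ _ _ HI). pose proof (Rpower_pos' b a).
      assert (0 < Rpower b a / (a * Gamma a)) by (apply Rdiv_lt_0_compat; auto; nra). lra.
  - apply gcdf_lim0; auto.
  - apply filterlim_const.
Qed.

Definition Mt a := RInt_gen (fun t => Rpower t (a / 2) * gamma_pdf a t) (at_right 0) (Rbar_locally p_infty).

Lemma cont0_Rpower p : cont0 (fun t => Rpower t p).
Proof. intros x Hx. apply exd_cont. unfold Rpower. auto_derive. lra. Qed.

Lemma Int_tg a : 0 < a -> Int (fun t => Rpower t (a / 2) * gamma_pdf a t).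
Proof.
  intros Ha. pose proof (Gamma_pos a Ha).
  apply (Int_cmp _ (fun t => / Gamma a * pe (a - 1 + a / 2) 1 t)).
  apply Int_scal, Int_pe; lra.
  apply cont0_mult. apply cont0_Rpower. apply cont0_gpdf.
  intros t Ht. rewrite Rabs_pos_eq.
  2:{ apply Rmult_le_pos. apply Rlt_le, Rpower_pos'. apply gpdf_nonneg; auto. }
  rewrite gpdf_pos, gk_pe, <- pe_mul by auto. right. unfold Rdiv. ring.
Qed.

Lemma IG_Mt a : 0 < a -> IG (fun t => Rpower t (a / 2) * gamma_pdf a t) (Mt a).
Proof.
  intros Ha. destruct (Int_IG _ (Int_tg a Ha)) as [l Hl]. unfold Mt. rewrite (IG_unique _ _ Hl). auto.
Qed.

Lemma gcdf_tail a y : 0 < a -> 0 < y -> 1 - gamma_cdf a y <= Rpower y (- (a / 2)) * Mt a.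
Proof.
  intros Ha Hy.
  assert (Hc : cont0 (gamma_pdf a)) by apply cont0_gpdf.
  assert (Hlim : filterlim (fun b => RInt (gamma_pdf a) y b) (Rbar_locally p_infty) (locally (1 - gamma_cdf a y))).
  { replace (1 - gamma_cdf a y) with (L1 a + RInt (gamma_pdf a) y 1).
    2:{ rewrite gcdf_pos by auto. pose proof (L0_L1 a Ha).
        assert (RInt (gamma_pdf a) y y = RInt (gamma_pdf a) y 1 + RInt (gamma_pdf a) 1 y)
          by (apply RInt_Ch; apply cont0_exRInt; auto; lra).
        rewrite RInt_point in H0. simpl in H0. unfold zero in H0; simpl in H0. lra. }
    apply (lim_shift _ (fun b => RInt (gamma_pdf a) 1 b)).
    apply IR_to_lim, IR_L1; auto.
    exists 1. intros b Hb. rewrite Rplus_comm. apply RInt_Ch; apply cont0_exRInt; auto; lra. }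
  assert (H := filterlim_le (F := Rbar_locally p_infty) (fun b => RInt (gamma_pdf a) y b) (fun _ => Rpower y (- (a / 2)) * Mt a)
      (1 - gamma_cdf a y) (Rpower y (- (a / 2)) * Mt a)).
  simpl in H. apply H; clear H; auto.
  - exists y. intros b Hb.
    apply Rle_trans with (RInt (fun t => Rpower y (- (a / 2)) * (Rpower t (a / 2) * gamma_pdf a t)) y b).
    + apply RInt_le; try lra. apply cont0_exRInt; auto; try lra. 
      apply cont0_exRInt; auto; try lra. apply cont0_scal, cont0_mult; auto. apply cont0_Rpower.
      intros t Ht. rewrite <- Rmult_assoc. rewrite <- (Rmult_1_l (gamma_pdf a t)) at 1.
      apply Rmult_le_compat_r. apply gpdf_nonneg; auto.
      unfold Rpower. rewrite <- exp_plus, <- exp_0. apply exp_le_exp.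
      assert (ln y <= ln t) by (apply ln_le; lra). nra.
    + rewrite RInt_scalR. apply Rmult_le_compat_l. apply Rlt_le, Rpower_pos'.
      apply (IG_partial _ _ (Int_tg a Ha)); try lra.
      intros; apply Rmult_le_pos. apply Rlt_le, Rpower_pos'. apply gpdf_nonneg; auto.
      apply IG_Mt; auto.
      apply cont0_exRInt; auto; try lra. apply cont0_mult; auto. apply cont0_Rpower.
  - apply filterlim_const.
Qed.


Lemma IG_subst f l c : 0 < c -> IG f l -> IG (fun z => f (c * z)) (l / c).
Proof.
  intros Hc Hf P [eps HP].
  set (P' := fun y : R => P (y / c)).
  assert (HP' : locally l P').
  { assert (Hec : 0 < eps * c) by (apply Rmult_lt_0_compat; [apply cond_pos|auto]).
    exists (mkposreal _ Hec). intros y Hy. apply ballR' in Hy. simpl in Hy. unfold P'. apply HP.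
    apply ballR. replace (y / c - l / c) with ((y - l) / c) by (field; lra).
    unfold Rdiv. rewrite Rabs_mult, Rabs_inv, (Rabs_pos_eq c) by lra.
    apply Rmult_lt_reg_r with c; auto. field_simplify; try lra. }
  specialize (Hf P' HP'). destruct Hf as [Q R HQ HR H].
  destruct HQ as [d Hd]. destruct HR as [M HM].
  assert (Hdc : 0 < d / c) by (apply Rdiv_lt_0_compat; [apply cond_pos|auto]).
  apply Filter_prod with (Q := fun a => 0 < a /\ a < d / c) (R := fun b => M / c < b).
  - exists (mkposreal _ Hdc). intros y Hy Hy0. apply ballR' in Hy. simpl in Hy.
    rewrite Rminus_0_r, Rabs_pos_eq in Hy by lra. auto.
  - exists (M / c). auto.
  - intros a b [Ha Had] Hb. simpl.
    assert (HQa : Q (c * a)).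
    { apply Hd. apply ballR. rewrite Rminus_0_r, Rabs_pos_eq by nra.
      apply Rmult_lt_reg_r with (/ c). apply Rinv_0_lt_compat; auto.
      replace (c * a * / c) with a by (field; lra). exact Had. nra. }
    assert (HRb : R (c * b)).
    { apply HM. apply Rmult_lt_reg_r with (/ c). apply Rinv_0_lt_compat; auto.
      replace (c * b * / c) with b by (field; lra). exact Hb. }
    destruct (H _ _ HQa HRb) as [y [Hy Py]]. simpl in Hy.
    exists (y / c). split; auto.
    assert (Hy' : is_RInt f (c * a + 0) (c * b + 0) y) by (rewrite !Rplus_0_r; auto).
    apply (is_RInt_comp_lin f c 0 a b y) in Hy'.
    apply (is_RInt_scal _ a b (/ c)) in Hy'.
    apply (is_RInt_ext (V:=R_NormedModule) _ (fun z => f (c * z))) in Hy'.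
    + unfold scal in Hy'; simpl in Hy'; unfold mult in Hy'; simpl in Hy'.
      replace (y / c) with (/ c * y) by (unfold Rdiv; ring). exact Hy'.
    + intros x _. unfold scal; simpl; unfold mult; simpl. rewrite Rplus_0_r. field. lra.
Qed.

Definition Lsub a c := Rpower c (- a) * (J a - ln c * Gamma a).

Lemma IG_Lsub a c : 0 < a -> 0 < c ->
  IG (fun z => ln z * Rpower z (a - 1) * exp (- (c * z))) (Lsub a c).
Proof.
  intros Ha Hc.
  assert (H1 := IG_subst _ _ c Hc (IG_J a Ha)).
  assert (H2 := IG_subst _ _ c Hc (IG_Gamma a Ha)).
  assert (H3 := IG_minus _ _ _ _ H1 (IG_scal (ln c) _ _ H2)).
  assert (H4 := IG_scal (Rpower c (1 - a)) _ _ H3).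
  replace (Lsub a c) with (Rpower c (1 - a) * (J a / c - ln c * (Gamma a / c))).
  2:{ unfold Lsub. replace (1 - a) with (1 + - a) by ring. rewrite Rpower_plus, Rpower_1 by auto.
      field. lra. }
  eapply IG_ext; [|exact H4].
  intros z Hz. cbv beta. unfold gk.
  rewrite ln_mult by auto. rewrite <- Rpower_mult_distr by auto.
  assert (Rpower c (1 - a) * Rpower c (a - 1) = 1).
  { rewrite <- Rpower_plus. replace (1 - a + (a - 1)) with 0 by ring. apply Rpower_O; auto. }
  replace (Rpower c (1 - a) * ((ln c + ln z) * (Rpower c (a - 1) * Rpower z (a - 1) * exp (- (c * z))) -
     ln c * (Rpower c (a - 1) * Rpower z (a - 1) * exp (- (c * z)))))
    with ((Rpower c (1 - a) * Rpower c (a - 1)) * (ln z * Rpower z (a - 1) * exp (- (c * z)))) by ring.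
  rewrite H. ring.
Qed.


Definition phiH a s z := ln z * gamma_cdf a (s * z) * gamma_pdf a z.
Definition Hf a s := RInt_gen (phiH a s) (at_right 0) (Rbar_locally p_infty).
Definition psiH a s z := ln z * (z * (gk a (s * z) / Gamma a)) * gamma_pdf a z.
Definition Hd a s := Rpower s (a - 1) / (Gamma a * Gamma a) * Lsub (2 * a) (1 + s).
Definition chiH a s z := ln z * (z * (z * ((a - 1) * Rpower (s * z) (a - 2) - Rpower (s * z) (a - 1))
   * exp (- (s * z)) / Gamma a)) * gamma_pdf a z.

Lemma cont0_ln : cont0 ln.
Proof. intros x Hx. apply continuous_ln; auto. Qed.

Lemma cont_gcdf a y : 0 < a -> 0 < y -> continuous (gamma_cdf a) y.
Proof. intros Ha Hy. apply exd_cont. eexists. apply gcdf_derive; auto. Qed.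

Lemma cont0_gcdf_comp a s : 0 < a -> 0 < s -> cont0 (fun z => gamma_cdf a (s * z)).
Proof.
  intros Ha Hs z Hz. apply exd_cont. eexists.
  apply (is_derive_comp (gamma_cdf a) (fun z => s * z)). apply gcdf_derive; auto. nra.
  apply (is_derive_scal (fun z => z) z s 1). apply (is_derive_id (K:=R_AbsRing)).
Qed.

Lemma cont0_phiH a s : 0 < a -> 0 < s -> cont0 (phiH a s).
Proof.
  intros Ha Hs. unfold phiH. apply cont0_mult. apply cont0_mult. apply cont0_ln.
  apply cont0_gcdf_comp; auto. apply cont0_gpdf.
Qed.

Definition lnD a q z := / Gamma a * / (a / 4) * (pe (a - 1 + q + a / 4) 1 z + pe (a - 1 + q + - (a / 4)) 1 z).

Lemma Int_lnD a q : 0 < a -> - a / 2 <= q -> Int (lnD a q).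
Proof. intros Ha Hq. unfold lnD. apply Int_scal, Int_plus; apply Int_pe; lra. Qed.

Lemma lnD_bound a q z : 0 < a -> 0 < z -> Rabs (ln z) * Rpower z q * gamma_pdf a z <= lnD a q z.
Proof.
  intros Ha Hz. pose proof (Gamma_pos a Ha).
  assert (He : 0 < a / 4) by lra.
  pose proof (ln_abs_bound z (a / 4) Hz He).
  rewrite gpdf_pos, gk_pe by auto. unfold lnD.
  rewrite <- !pe_mul.
  pose proof (pe_pos (a - 1) 1 z). pose proof (Rpower_pos' z q).
  apply Rle_trans with ((Rpower z (a / 4) + Rpower z (- (a / 4))) / (a / 4) * Rpower z q * (pe (a - 1) 1 z / Gamma a)).
  - apply Rmult_le_compat_r. apply Rlt_le, Rdiv_lt_0_compat; auto.
    apply Rmult_le_compat_r; lra.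
  - right. unfold Rdiv. ring.
Qed.

Lemma Int_phiH a s : 0 < a -> 0 < s -> Int (phiH a s).
Proof.
  intros Ha Hs. apply (Int_cmp _ (lnD a 0)). apply Int_lnD; lra. apply cont0_phiH; auto.
  intros z Hz. eapply Rle_trans. 2: apply lnD_bound; auto.
  rewrite Rpower_O by auto. unfold phiH. rewrite !Rabs_mult, Rmult_1_r.
  rewrite (Rabs_pos_eq (gamma_pdf a z)) by (apply gpdf_nonneg; auto).
  pose proof (gcdf_bounds a (s * z) Ha). rewrite (Rabs_pos_eq (gamma_cdf a (s * z))) by lra.
  pose proof (Rabs_pos (ln z)). pose proof (gpdf_nonneg a z Ha).
  apply Rmult_le_compat_r; auto. rewrite <- (Rmult_1_r (Rabs (ln z))) at 2.
  apply Rmult_le_compat_l; lra.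
Qed.

Lemma IG_Hf a s : 0 < a -> 0 < s -> IG (phiH a s) (Hf a s).
Proof.
  intros Ha Hs. destruct (Int_IG _ (Int_phiH a s Ha Hs)) as [l Hl]. unfold Hf. rewrite (IG_unique _ _ Hl). auto.
Qed.

Lemma Rpower_z3 z p : 0 < z -> z * Rpower z p * Rpower z p = Rpower z (2 * p + 1).
Proof.
  intros Hz. rewrite <- (Rpower_1 z) at 1 by auto. rewrite <- !Rpower_plus. f_equal. ring.
Qed.

Lemma IG_Hd a s : 0 < a -> 0 < s -> IG (psiH a s) (Hd a s).
Proof.
  intros Ha Hs. pose proof (Gamma_pos a Ha).
  assert (H1 := IG_scal (Rpower s (a - 1) / (Gamma a * Gamma a)) _ _ (IG_Lsub (2 * a) (1 + s) ltac:(lra) ltac:(lra))).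
  eapply IG_ext; [|exact H1]. intros z Hz. cbv beta. unfold psiH.
  rewrite gpdf_pos by auto. unfold gk.
  rewrite <- Rpower_mult_distr by auto.
  replace (2 * a - 1) with (2 * (a - 1) + 1) by ring. rewrite <- Rpower_z3 by auto.
  replace (- ((1 + s) * z)) with (- (s * z) + - z) by ring. rewrite exp_plus.
  field. lra.
Qed.


Lemma phiH_derive a x z : 0 < a -> 0 < x -> 0 < z -> is_derive (fun y => phiH a y z) x (psiH a x z).
Proof.
  intros Ha Hx Hz.
  assert (HG : is_derive (fun y => gamma_cdf a (y * z)) x (z * gamma_pdf a (x * z))).
  { apply (is_derive_comp (gamma_cdf a) (fun y => y * z)). apply gcdf_derive; auto. nra.
    auto_derive; auto. ring. }
  unfold phiH, psiH.
  apply (is_derive_ext (fun y => (ln z * gamma_pdf a z) * gamma_cdf a (y * z))).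
  intros t; simpl; ring.
  replace (ln z * (z * (gk a (x * z) / Gamma a)) * gamma_pdf a z) with
    (scal (ln z * gamma_pdf a z) (z * gamma_pdf a (x * z))).
  2:{ rewrite (gpdf_pos a (x * z)) by nra. unfold scal; simpl; unfold mult; simpl. ring. }
  exact (is_derive_scal (fun y => gamma_cdf a (y * z)) x (ln z * gamma_pdf a z) _ HG).
Qed.

Lemma psiH_derive a x z : 0 < a -> 0 < x -> 0 < z -> is_derive (fun y => psiH a y z) x (chiH a x z).
Proof.
  intros Ha Hx Hz. pose proof (Gamma_pos a Ha). unfold psiH, chiH, gk, Rpower. auto_derive. nra.
  assert (Hxz : 0 < x * z) by nra.
  replace ((a - 1) * ln (x * z)) with ((a - 2) * ln (x * z) + ln (x * z)) by ring.
  rewrite exp_plus, exp_ln by auto. field. split; lra.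
Qed.

Lemma Rpower_base_le_sum s b1 b2 q : 0 < b1 -> b1 <= s <= b2 -> Rpower s q <= Rpower b1 q + Rpower b2 q.
Proof.
  intros Hb1 Hs. pose proof (Rpower_pos' b1 q). pose proof (Rpower_pos' b2 q).
  assert (ln b1 <= ln s) by (apply ln_le; lra). assert (ln s <= ln b2) by (apply ln_le; lra).
  unfold Rpower in *. destruct (Rle_dec 0 q).
  - assert (exp (q * ln s) <= exp (q * ln b2)) by (apply exp_le_exp; nra). lra.
  - assert (exp (q * ln s) <= exp (q * ln b1)) by (apply exp_le_exp; nra). lra.
Qed.

Definition S12 s0 q := Rpower (s0 / 2) q + Rpower (3 * s0 / 2) q.
Definition KH a s0 z := / Gamma a * (Rabs (a - 1) * S12 s0 (a - 2) * lnD a a z + S12 s0 (a - 1) * lnD a (a + 1) z).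

Lemma Int_KH a s0 : 0 < a -> Int (KH a s0).
Proof.
  intros Ha. unfold KH. apply Int_scal, Int_plus; apply Int_scal, Int_lnD; lra.
Qed.

Lemma chiH_bound a s0 x z : 0 < a -> 0 < s0 -> Rabs (x - s0) < s0 / 2 -> 0 < z ->
  Rabs (chiH a x z) <= KH a s0 z.
Proof.
  intros Ha Hs0 Hx Hz. apply Rabs_lt_between in Hx.
  pose proof (Gamma_pos a Ha) as HG.
  assert (Hx0 : 0 < x) by lra.
  assert (HS1 : Rpower x (a - 2) <= S12 s0 (a - 2)) by (apply Rpower_base_le_sum; lra).
  assert (HS2 : Rpower x (a - 1) <= S12 s0 (a - 1)) by (apply Rpower_base_le_sum; lra).
  assert (HE : exp (- (x * z)) <= 1) by (rewrite <- exp_0; apply exp_le_exp; nra).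
  pose proof (exp_pos (- (x * z))).
  set (D1 := (a - 1) * Rpower (x * z) (a - 2) - Rpower (x * z) (a - 1)).
  assert (HD1 : Rabs D1 <= Rabs (a - 1) * S12 s0 (a - 2) * Rpower z (a - 2) + S12 s0 (a - 1) * Rpower z (a - 1)).
  { unfold D1. eapply Rle_trans. apply Rabs_triang. rewrite Rabs_Ropp, Rabs_mult.
    rewrite !(Rabs_pos_eq (Rpower _ _)) by (apply Rlt_le, Rpower_pos').
    rewrite <- !Rpower_mult_distr by auto.
    pose proof (Rpower_pos' z (a - 2)). pose proof (Rpower_pos' z (a - 1)).
    pose proof (Rabs_pos (a - 1)).
    apply Rplus_le_compat. rewrite <- Rmult_assoc. apply Rmult_le_compat_r; [lra|]. apply Rmult_le_compat_l; auto. apply Rmult_le_compat_r; lra. }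
  unfold chiH. fold D1. unfold Rdiv. rewrite !Rabs_mult, Rabs_inv.
  rewrite (Rabs_pos_eq (gamma_pdf a z)) by (apply gpdf_nonneg; auto).
  rewrite (Rabs_pos_eq z) by lra.
  rewrite (Rabs_pos_eq (exp _)) by lra. rewrite (Rabs_pos_eq (Gamma a)) by lra.
  pose proof (lnD_bound a a z Ha Hz). pose proof (lnD_bound a (a + 1) z Ha Hz).
  assert (Hza : z * z * Rpower z (a - 2) = Rpower z a).
  { rewrite <- (Rpower_1 z) at 1 2 by auto. rewrite <- !Rpower_plus. f_equal. ring. }
  assert (Hza1 : z * z * Rpower z (a - 1) = Rpower z (a + 1)).
  { rewrite <- (Rpower_1 z) at 1 2 by auto. rewrite <- !Rpower_plus. f_equal. ring. }
  pose proof (Rabs_pos (ln z)). pose proof (gpdf_nonneg a z Ha). pose proof (Rabs_pos D1).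
  assert (HiG : 0 < / Gamma a) by (apply Rinv_0_lt_compat; auto).
  apply Rle_trans with (Rabs (ln z) * (z * (z * (Rabs (a - 1) * S12 s0 (a - 2) * Rpower z (a - 2)
       + S12 s0 (a - 1) * Rpower z (a - 1)) * 1 * / Gamma a)) * gamma_pdf a z).
  - apply Rmult_le_compat_r; auto. apply Rmult_le_compat_l; auto.
    apply Rmult_le_compat_l; [lra|]. apply Rmult_le_compat_r; [lra|].
    apply Rmult_le_compat; try lra. apply Rmult_le_pos; lra.
    apply Rmult_le_compat_l; lra.
  - unfold KH. 
    apply Rle_trans with (/ Gamma a * (Rabs (a - 1) * S12 s0 (a - 2) * (Rabs (ln z) * Rpower z a * gamma_pdf a z)
        + S12 s0 (a - 1) * (Rabs (ln z) * Rpower z (a + 1) * gamma_pdf a z))).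
    + right. rewrite <- Hza, <- Hza1. ring.
    + apply Rmult_le_compat_l; [lra|]. 
      assert (0 <= S12 s0 (a - 2)) by (unfold S12; pose proof (Rpower_pos' (s0/2) (a-2)); pose proof (Rpower_pos' (3*s0/2) (a-2)); lra).
      assert (0 <= S12 s0 (a - 1)) by (unfold S12; pose proof (Rpower_pos' (s0/2) (a-1)); pose proof (Rpower_pos' (3*s0/2) (a-1)); lra).
      pose proof (Rabs_pos (a - 1)).
      apply Rplus_le_compat; apply Rmult_le_compat_l; auto. apply Rmult_le_pos; auto.
Qed.

Lemma Hf_derive a s0 : 0 < a -> 0 < s0 -> is_derive (Hf a) s0 (Hd a s0).
Proof.
  intros Ha Hs0.
  destruct (Int_IG _ (Int_KH a s0 Ha)) as [lK HlK].
  apply (diff_IG (phiH a) (psiH a) (chiH a) (KH a s0) (Hf a) s0 (s0 / 2) (Hd a s0) lK).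
  - lra.
  - intros x Hx. apply Rabs_lt_between in Hx. apply IG_Hf; auto; lra.
  - apply IG_Hd; auto.
  - exact HlK.
  - intros z Hz x Hx. apply Rabs_lt_between in Hx. apply phiH_derive; auto; lra.
  - intros z Hz x Hx. apply Rabs_lt_between in Hx. apply psiH_derive; auto; lra.
  - intros z Hz x Hx. apply chiH_bound; auto.
Qed.


Definition C1 a := RInt_gen (lnD a a) (at_right 0) (Rbar_locally p_infty).
Definition C2 a := RInt_gen (lnD a (- (a / 2))) (at_right 0) (Rbar_locally p_infty).

Lemma IG_C1 a : 0 < a -> IG (lnD a a) (C1 a).
Proof. intros Ha. destruct (Int_IG _ (Int_lnD a a Ha ltac:(lra))) as [l Hl]. unfold C1. rewrite (IG_unique _ _ Hl). auto. Qed.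
Lemma IG_C2 a : 0 < a -> IG (lnD a (- (a / 2))) (C2 a).
Proof. intros Ha. destruct (Int_IG _ (Int_lnD a (- (a / 2)) Ha ltac:(lra))) as [l Hl]. unfold C2. rewrite (IG_unique _ _ Hl). auto. Qed.

Lemma Hf_small a s : 0 < a -> 0 < s -> Rabs (Hf a s) <= Rpower s a / (a * Gamma a) * C1 a.
Proof.
  intros Ha Hs. pose proof (Gamma_pos a Ha).
  apply (IG_norm (phiH a s) (fun z => Rpower s a / (a * Gamma a) * lnD a a z)).
  - intros z Hz. unfold phiH.
    pose proof (gcdf_bounds a (s * z) Ha). pose proof (gcdf_le_pow a (s * z) Ha ltac:(nra)) as Hp.
    pose proof (lnD_bound a a z Ha Hz). pose proof (gpdf_nonneg a z Ha).
    rewrite !Rabs_mult, (Rabs_pos_eq (gamma_cdf _ _)), (Rabs_pos_eq (gamma_pdf _ _)) by lra.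
    rewrite <- Rpower_mult_distr in Hp by auto.
    pose proof (Rabs_pos (ln z)).
    apply Rle_trans with (Rabs (ln z) * (Rpower s a * Rpower z a / (a * Gamma a)) * gamma_pdf a z).
    apply Rmult_le_compat_r; auto. apply Rmult_le_compat_l; auto.
    apply Rle_trans with (Rpower s a / (a * Gamma a) * (Rabs (ln z) * Rpower z a * gamma_pdf a z)).
    right. unfold Rdiv. ring.
    apply Rmult_le_compat_l; auto. apply Rlt_le, Rdiv_lt_0_compat. apply Rpower_pos'. nra.
  - apply IG_Hf; auto.
  - apply IG_scal, IG_C1; auto.
Qed.

Lemma IG_lng a : 0 < a -> IG (fun z => ln z * gamma_pdf a z) (J a / Gamma a).
Proof.
  intros Ha. pose proof (Gamma_pos a Ha).
  replace (J a / Gamma a) with (/ Gamma a * J a) by (unfold Rdiv; ring).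
  eapply IG_ext; [|apply IG_scal, IG_J; auto]. intros z Hz. cbv beta.
  rewrite gpdf_pos by auto. unfold Rdiv. ring.
Qed.

Lemma Mt_nonneg a : 0 < a -> 0 <= Mt a.
Proof.
  intros Ha. rewrite <- (Rmult_0_l (Mt a)). 
  apply (IG_le (fun z => 0 * (Rpower z (a / 2) * gamma_pdf a z)) (fun t => Rpower t (a / 2) * gamma_pdf a t)).
  intros x Hx. rewrite Rmult_0_l. apply Rmult_le_pos. apply Rlt_le, Rpower_pos'. apply gpdf_nonneg; auto.
  apply IG_scal, IG_Mt; auto. apply IG_Mt; auto.
Qed.

Lemma Hf_large a s : 0 < a -> 0 < s -> Rabs (Hf a s - J a / Gamma a) <= Rpower s (- (a / 2)) * Mt a * C2 a.
Proof.
  intros Ha Hs. pose proof (Gamma_pos a Ha). pose proof (Mt_nonneg a Ha).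
  apply (IG_norm (fun z => phiH a s z - ln z * gamma_pdf a z) (fun z => Rpower s (- (a / 2)) * Mt a * lnD a (- (a / 2)) z)).
  - intros z Hz. unfold phiH.
    pose proof (gcdf_bounds a (s * z) Ha). pose proof (gcdf_tail a (s * z) Ha ltac:(nra)) as Ht.
    pose proof (lnD_bound a (- (a / 2)) z Ha Hz). pose proof (gpdf_nonneg a z Ha).
    rewrite <- Rpower_mult_distr in Ht by auto.
    replace (ln z * gamma_cdf a (s * z) * gamma_pdf a z - ln z * gamma_pdf a z) with
      (ln z * (gamma_cdf a (s * z) - 1) * gamma_pdf a z) by ring.
    rewrite !Rabs_mult, (Rabs_pos_eq (gamma_pdf _ _)) by lra.
    rewrite Rabs_minus_sym, (Rabs_pos_eq (1 - _)) by lra.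
    pose proof (Rabs_pos (ln z)). pose proof (Rpower_pos' s (- (a / 2))). pose proof (Rpower_pos' z (- (a / 2))).
    apply Rle_trans with (Rabs (ln z) * (Rpower s (- (a / 2)) * Rpower z (- (a / 2)) * Mt a) * gamma_pdf a z).
    apply Rmult_le_compat_r; auto. apply Rmult_le_compat_l; auto.
    apply Rle_trans with (Rpower s (- (a / 2)) * Mt a * (Rabs (ln z) * Rpower z (- (a / 2)) * gamma_pdf a z)).
    right. ring.
    apply Rmult_le_compat_l; auto. apply Rmult_le_pos; lra.
  - apply IG_minus. apply IG_Hf; auto. apply IG_lng; auto.
  - apply IG_scal, IG_C2; auto.
Qed.

Lemma Rpower_small q eps : 0 < q -> 0 < eps -> exists M, 0 < M /\ forall mu, M <= mu -> Rpower mu (- q) < eps.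
Proof.
  intros Hq He. exists (exp (- ln eps / q + 1)). split. apply exp_pos.
  intros mu Hmu. assert (Hmu0 : 0 < mu) by (eapply Rlt_le_trans; [apply exp_pos|eauto]).
  assert (ln (exp (- ln eps / q + 1)) <= ln mu) by (apply ln_le; auto; apply exp_pos).
  rewrite ln_exp in H. unfold Rpower. rewrite <- (exp_ln eps) by auto. apply exp_increasing.
  apply Rmult_le_compat_l with (r := q) in H; [|lra].
  replace (q * (- ln eps / q + 1)) with (- ln eps + q) in H by (field; lra). nra.
Qed.


Definition Fm a mu := - (Gamma (2 * a) * Rpower mu (a - 1) / (Gamma a ^ 2 * Rpower (1 + mu) (2 * a))) * ln mu.

Lemma cstar_eq a mu : 0 < mu -> cstar a mu = Hf a (/ mu) + Hf a mu.
Proof.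
  intros Hmu. unfold cstar, Hf, phiH. f_equal. f_equal. apply functional_extensionality. intros z.
  f_equal. f_equal. f_equal. unfold Rdiv. ring.
Qed.

Lemma Dc_eq a mu : 0 < a -> 0 < mu -> - 1 / mu ^ 2 * Hd a (/ mu) + Hd a mu = Fm a mu.
Proof.
  intros Ha Hmu. pose proof (Gamma_pos a Ha).
  unfold Hd, Lsub, Fm, Rpower.
  rewrite ln_Rinv by auto.
  replace (1 + / mu) with ((1 + mu) / mu) by (field; lra).
  rewrite ln_div by lra.
  set (m := ln mu). set (n := ln (1 + mu)).
  assert (HX : exp ((a - 1) * - m) * exp (- (2 * a) * (n - m)) = exp ((a - 1) * m) * exp (- (2 * a) * n) * (mu * mu)).
  { replace (mu * mu) with (exp m * exp m) by (unfold m; rewrite exp_ln; auto).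
    rewrite <- !exp_plus. f_equal. ring. }
  assert (HY : exp (2 * a * n) = / exp (- (2 * a) * n)).
  { rewrite <- exp_Ropp. f_equal. ring. }
  rewrite HY.
  replace (exp ((a - 1) * - m) / (Gamma a * Gamma a) * (exp (- (2 * a) * (n - m)) * (J (2 * a) - (n - m) * Gamma (2 * a))))
    with ((exp ((a - 1) * - m) * exp (- (2 * a) * (n - m))) / (Gamma a * Gamma a) * (J (2 * a) - (n - m) * Gamma (2 * a))) by (field; lra).
  rewrite HX. pose proof (exp_pos (- (2 * a) * n)). field. repeat split; lra.
Qed.

Lemma cstar_derive a mu : 0 < a -> 0 < mu -> is_derive (cstar a) mu (Fm a mu).
Proof.
  intros Ha Hmu.
  apply (is_derive_ext_loc (fun y => Hf a (/ y) + Hf a y)).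
  - exists (mkposreal mu Hmu). intros y Hy. apply ballR' in Hy. simpl in Hy. apply Rabs_lt_between in Hy.
    rewrite cstar_eq; auto. lra.
  - rewrite <- Dc_eq by auto.
    apply (is_derive_plus (fun y => Hf a (/ y)) (Hf a)).
    + assert (Hi : is_derive (fun y : R => / y) mu (- 1 / mu ^ 2)).
      { apply (is_derive_inv (fun y => y) mu 1). apply (is_derive_id (K:=R_AbsRing)). lra. }
      exact (is_derive_comp (Hf a) (fun y => / y) mu _ _ (Hf_derive a (/ mu) Ha (Rinv_0_lt_compat _ Hmu)) Hi).
    + apply Hf_derive; auto.
Qed.

Lemma Fm_nonpos a mu : 0 < a -> 1 <= mu -> Fm a mu <= 0.
Proof.
  intros Ha Hmu. unfold Fm. pose proof (Gamma_pos a Ha). pose proof (Gamma_pos (2 * a) ltac:(lra)).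
  pose proof (Rpower_pos' mu (a - 1)). pose proof (Rpower_pos' (1 + mu) (2 * a)).
  assert (0 <= ln mu) by (rewrite <- ln_1; apply ln_le; lra).
  assert (0 < Gamma (2 * a) * Rpower mu (a - 1) / (Gamma a ^ 2 * Rpower (1 + mu) (2 * a))).
  { apply Rdiv_lt_0_compat. nra. apply Rmult_lt_0_compat; auto. apply pow_lt; auto. }
  nra.
Qed.

Lemma cstar_mono a m1 m2 : 0 < a -> 1 <= m1 -> m1 <= m2 -> cstar a m2 <= cstar a m1.
Proof.
  intros Ha H1 H2.
  destruct (MVT_gen (cstar a) m1 m2 (Fm a)) as [c [Hc Heq]].
  - intros x Hx. rewrite Rmin_left, Rmax_right in Hx by lra. apply cstar_derive; lra.
  - intros x Hx. rewrite Rmin_left, Rmax_right in Hx by lra.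
    apply continuity_pt_filterlim. apply exd_cont. eexists. apply cstar_derive; lra.
  - rewrite Rmin_left, Rmax_right in Hc by lra.
    assert (Fm a c <= 0) by (apply Fm_nonpos; lra). nra.
Qed.

Lemma small_mul x c e : 0 <= x -> 0 <= c -> 0 < e -> x < e / (c + 1) -> x * c < e.
Proof.
  intros Hx Hc He H. apply Rmult_lt_compat_r with (r := c + 1) in H; [|lra].
  replace (e / (c + 1) * (c + 1)) with e in H by (field; lra). nra.
Qed.

Lemma cstar_lim a : 0 < a -> forall eps, 0 < eps -> exists M, 1 <= M /\ forall mu, M <= mu ->
  Rabs (cstar a mu - J a / Gamma a) < eps.
Proof.
  intros Ha eps Heps. pose proof (Gamma_pos a Ha).
  set (A := / (a * Gamma a) * C1 a). set (B := Mt a * C2 a).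
  destruct (Rpower_small a (eps / 2 / (Rabs A + 1))) as [M1 [HM1 HM1b]]; auto.
  apply Rdiv_lt_0_compat. lra. pose proof (Rabs_pos A); lra.
  destruct (Rpower_small (a / 2) (eps / 2 / (Rabs B + 1))) as [M2 [HM2 HM2b]]. lra.
  apply Rdiv_lt_0_compat. lra. pose proof (Rabs_pos B); lra.
  exists (Rmax 1 (Rmax M1 M2)). split. apply Rmax_l.
  intros mu Hmu.
  assert (1 <= mu) by (eapply Rle_trans; [apply Rmax_l|eauto]).
  assert (M1 <= mu) by (eapply Rle_trans; [eapply Rle_trans; [apply Rmax_l|apply Rmax_r]|eauto]).
  assert (M2 <= mu) by (eapply Rle_trans; [eapply Rle_trans; [apply Rmax_r|apply Rmax_r]|eauto]).
  rewrite cstar_eq by lra.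
  pose proof (Hf_small a (/ mu) Ha ltac:(apply Rinv_0_lt_compat; lra)) as Hs.
  pose proof (Hf_large a mu Ha ltac:(lra)) as Hl.
  assert (Rpower (/ mu) a = Rpower mu (- a)).
  { unfold Rpower. rewrite ln_Rinv by lra. f_equal. ring. }
  rewrite H3 in Hs.
  specialize (HM1b mu H1). specialize (HM2b mu H2).
  pose proof (Rpower_pos' mu (- a)). pose proof (Rpower_pos' mu (- (a / 2))).
  assert (Hs' : Rabs (Hf a (/ mu)) <= Rpower mu (- a) * Rabs A).
  { eapply Rle_trans. exact Hs. apply Rle_trans with (Rpower mu (- a) * A).
    right. unfold A, Rdiv. ring. apply Rmult_le_compat_l; [lra|apply Rle_abs]. }
  assert (Hl' : Rabs (Hf a mu - J a / Gamma a) <= Rpower mu (- (a / 2)) * Rabs B).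
  { eapply Rle_trans. exact Hl. apply Rle_trans with (Rpower mu (- (a / 2)) * B).
    right. unfold B. ring. apply Rmult_le_compat_l; [lra|apply Rle_abs]. }
  assert (Rpower mu (- a) * Rabs A < eps / 2) by (apply small_mul; auto; try lra; apply Rabs_pos).
  assert (Rpower mu (- (a / 2)) * Rabs B < eps / 2) by (apply small_mul; auto; try lra; apply Rabs_pos).
  replace (Hf a (/ mu) + Hf a mu - J a / Gamma a) with (Hf a (/ mu) + (Hf a mu - J a / Gamma a)) by ring.
  eapply Rle_lt_trans. apply Rabs_triang. lra.
Qed.

Lemma deriv_within (f : R -> R) x l : is_derive f x l ->
  filterlim (fun h => (f (x + h) - f x) / h) (within (fun h => h <> 0 /\ 1 <= x + h) (locally 0)) (locally l).
Proof.
  intros Hd. apply is_derive_Reals in Hd.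
  intros P [eps HP]. destruct (Hd eps (cond_pos eps)) as [del Hdel].
  exists del. intros h Hh [Hh0 _]. apply HP. apply ballR. apply Hdel; auto.
  apply ballR' in Hh. rewrite Rminus_0_r in Hh. exact Hh.
Qed.

Theorem mainTheorem4 (alpha : R) (Halpha : 0 < alpha) :
  (forall mu : R, 1 <= mu ->
     filterlim (fun h => (cstar alpha (mu + h) - cstar alpha mu) / h)
       (within (fun h => h <> 0 /\ 1 <= mu + h) (locally 0))
       (locally (- (Gamma (2 * alpha) * Rpower mu (alpha - 1)
                    / (Gamma alpha ^ 2 * Rpower (1 + mu) (2 * alpha))) * ln mu))
     /\ - (Gamma (2 * alpha) * Rpower mu (alpha - 1)
           / (Gamma alpha ^ 2 * Rpower (1 + mu) (2 * alpha))) * ln mu <= 0)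
  /\ is_glb_Rbar (fun y => exists mu, 1 <= mu /\ y = cstar alpha mu)
       (Finite (digamma alpha))
  /\ is_lub_Rbar (fun y => exists mu, 1 <= mu /\ y = cstar alpha mu)
       (Finite (cstar alpha 1))
  /\ cstar alpha 1 =
       2 * RInt_gen (fun z => ln z * gamma_cdf alpha z * gamma_pdf alpha z)
             (at_right 0) (Rbar_locally p_infty).
Proof.
  assert (Hdig : digamma alpha = J alpha / Gamma alpha).
  { unfold digamma. rewrite (is_derive_unique _ _ _ (Gamma_derive alpha Halpha)). auto. }
  split; [|split; [|split]].
  - intros mu Hmu. split.
    + exact (deriv_within (cstar alpha) mu (Fm alpha mu) (cstar_derive alpha mu Halpha ltac:(lra))).
    + exact (Fm_nonpos alpha mu Halpha Hmu).
  - rewrite Hdig. split.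
    + intros x [mu [Hmu ->]]. simpl. apply Rnot_lt_le. intros Hlt.
      destruct (cstar_lim alpha Halpha (J alpha / Gamma alpha - cstar alpha mu)) as [M [HM1 HM]]. lra.
      specialize (HM (Rmax M mu) (Rmax_l _ _)).
      assert (cstar alpha (Rmax M mu) <= cstar alpha mu) by (apply cstar_mono; auto; apply Rmax_r).
      apply Rabs_lt_between in HM. lra.
    + intros b Hb. destruct b as [r| |]; simpl; auto.
      * apply Rnot_lt_le. intros Hlt.
        destruct (cstar_lim alpha Halpha (r - J alpha / Gamma alpha)) as [M [HM1 HM]]. lra.
        specialize (HM M (Rle_refl _)).
        assert (Hr := Hb (cstar alpha M) (ex_intro _ M (conj HM1 eq_refl))). simpl in Hr.
        apply Rabs_lt_between in HM. lra.
      * exact (Hb (cstar alpha 1) (ex_intro _ 1 (conj (Rle_refl _) eq_refl))).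
  - split.
    + intros x [mu [Hmu ->]]. simpl. apply cstar_mono; auto; lra.
    + intros b Hb. exact (Hb (cstar alpha 1) (ex_intro _ 1 (conj (Rle_refl _) eq_refl))).
  - unfold cstar.
    replace (fun z => ln z * gamma_cdf alpha (z / 1) * gamma_pdf alpha z) with
      (fun z => ln z * gamma_cdf alpha z * gamma_pdf alpha z)
      by (apply functional_extensionality; intros z; unfold Rdiv; rewrite Rinv_1, Rmult_1_r; auto).
    replace (fun z => ln z * gamma_cdf alpha (1 * z) * gamma_pdf alpha z) with
      (fun z => ln z * gamma_cdf alpha z * gamma_pdf alpha z)
      by (apply functional_extensionality; intros z; rewrite Rmult_1_l; auto).
    ring.
Qed.
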